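(* As operators on symmetric functions, $$[D(\alpha),E_2] =(\alpha-1)\sum_{i\geq1}(i-1)^2p_i\frac{\partial}{\partial p_{i-1}}+ \sum_{i,j\geq1}(i+j-1)p_ip_j\frac{\partial}{\partial p_{i+j-1}}+\alpha\sum_{i,j\geq1}ij\,p_{i+j+1}\frac{\partial}{\partial p_{i}}\frac{\partial}{\partial p_{j}},$$ where the $i=1$ term of the first sum is zero.
   Context: Symmetric functions are written in power sums $p_k$ in variables $x=(x_1,x_2,\dots)$. $D(\alpha) = \frac{\alpha}{2}\sum_{i}x_i^2\frac{\partial^2}{\partial x_i^2}+\sum_{i}\sum_{j\neq i}\frac{x_ix_j}{x_i-x_j}\frac{\partial}{\partial x_i}$ is the Laplace–Beltrami operator, and $E_2=\sum_{k\ge1}kp_{k+1}\frac{\partial}{\partial p_k}=\sum_i x_i^2\frac{\partial}{\partial x_i}$. $[A,B]=AB-BA$. *)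

(* Defs.v *)
From HB Require Import structures.
From mathcomp Require Import all_boot all_algebra.
From mathcomp Require Import fraction.
From mathcomp.multinomials Require Import mpoly.
Set Implicit Arguments. Unset Strict Implicit. Unset Printing Implicit Defensive.
Import GRing.Theory.
Local Open Scope ring_scope.

(* x-side: N variables x_0..x_{N-1}; we work in the field of rational functions
   Frac R N = Frac({mpoly R[N]}), since D(alpha) involves x_i x_j/(x_i-x_j).
   p-side: the ring of symmetric functions Lambda = R[p_1,p_2,...]; a symmetric
   function in p_1..p_n is an mpoly in n variables (variable k-1 <-> p_k).      *)

Notation "x %:F" := (@FracField.tofrac _ x).

Definition Frac (R : fieldType) (N : nat) := {fraction {mpoly R[N]}}.

Definition cF (R : fieldType) (N : nat) (a : R) : Frac R N := (a%:MP)%:F.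
Arguments cF {R} N a.
Definition xF (R : fieldType) (N : nat) (i : 'I_N) : Frac R N := ('X_i)%:F.
Arguments xF {R N} i.

Definition fderiv (R : fieldType) (N : nat) (i : 'I_N) (q : Frac R N) : Frac R N :=
  let r := repr q in
  ((mderiv i \n_r * \d_r - \n_r * mderiv i \d_r)%:F) / ((\d_r ^+ 2)%:F).
Arguments fderiv {R N} i q.

Definition E2x (R : fieldType) (N : nat) (q : Frac R N) : Frac R N :=
  \sum_(i < N) xF i ^+ 2 * fderiv i q.
Arguments E2x {R N} q.

Definition Dx (R : fieldType) (N : nat) (alpha : R) (q : Frac R N) : Frac R N :=
  cF N (alpha / 2) * (\sum_(i < N) xF i ^+ 2 * fderiv i (fderiv i q))
  + \sum_(i < N) \sum_(j < N | j != i)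
       (xF i * xF j / (xF i - xF j)) * fderiv i q.
Arguments Dx {R N} alpha q.

Definition commDE2 (R : fieldType) (N : nat) (alpha : R) (q : Frac R N) : Frac R N :=
  Dx alpha (E2x q) - E2x (Dx alpha q).
Arguments commDE2 {R N} alpha q.

(* power sum p_k as a variable of {mpoly R[M]} (k = 1..M); 0 outside this range *)
Definition pp (R : fieldType) (M : nat) (k : nat) : {mpoly R[M]} :=
  if k is k'.+1 then oapp (fun i : 'I_M => 'X_i) 0 (insub k') else 0.

(* d/dp_k on {mpoly R[M]} (k = 1..M); 0 outside this range *)
Definition dp (R : fieldType) (M : nat) (k : nat) (f : {mpoly R[M]}) : {mpoly R[M]} :=
  if k is k'.+1 then oapp (fun i : 'I_M => mderiv i f) 0 (insub k') else 0.
Arguments dp {R M} k f.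

Definition emb (R : fieldType) (n M : nat) (f : {mpoly R[n]}) : {mpoly R[M]} :=
  mmap (fun a : R => a%:MP) (fun i : 'I_n => pp R M i.+1) f.
Arguments emb {R n} M f.

Definition rho (R : fieldType) (M N : nat) (f : {mpoly R[M]}) : Frac R N :=
  mmap (fun a : R => cF N a) (fun k : 'I_M => \sum_(i < N) xF i ^+ k.+1) f.
Arguments rho {R M} N f.

Definition rhsOp (R : fieldType) (M : nat) (alpha : R) (f : {mpoly R[M]}) : {mpoly R[M]} :=
  (alpha - 1) *: (\sum_(1 <= i < M.+1) ((i - 1) ^ 2)%:R *: (pp R M i * dp (i - 1) f))
  + \sum_(1 <= i < M.+1) \sum_(1 <= j < M.+1)
       (i + j - 1)%:R *: (pp R M i * pp R M j * dp (i + j - 1) f)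
  + alpha *: (\sum_(1 <= i < M.+1) \sum_(1 <= j < M.+1)
       (i * j)%:R *: (pp R M (i + j + 1) * dp i (dp j f))).
Arguments rhsOp {R M} alpha f.

(* Main.v *)
Require Import Defs.
From HB Require Import structures.
From mathcomp Require Import all_boot all_algebra.
From mathcomp Require Import fraction generic_quotient.
From mathcomp.multinomials Require Import mpoly.
From mathcomp Require Import ring zify.
Import GRing.Theory.
Local Open Scope ring_scope.
Set Implicit Arguments. Unset Strict Implicit. Unset Printing Implicit Defensive.

Local Open Scope quotient_scope.

Lemma frac_repr (A : idomainType) (q : {fraction A}) : q = (\n_(repr q))%:F / (\d_(repr q))%:F.
Proof.
have dn : (\d_(repr q))%:F != 0 by rewrite tofrac_eq0 denom_ratioP.
apply: (mulIf dn); rewrite divfK //.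
rewrite -{1}[q]reprK.
unlock tofrac. 
simpl. apply: (etrans (esym (FracField.pi_mul _ _))). apply/eqmodP; rewrite /= FracField.equivfE /FracField.mulf !numden_Ratio ?mulf_neq0 ?oner_neq0 ?denom_ratioP //.
by rewrite !mulr1 mulrC. Qed.

Lemma alg1 (K : fieldType) (n b d a : K) : b != 0 -> d != 0 -> a / b = n / d -> n * b = a * d.
Proof. move=> b0 d0 E. have H: n * b = n / d * (b * d) by field. by rewrite H -E; field. Qed.

Lemma alg2 (K : fieldType) (a a' b b' d d' n n' : K): b != 0 -> d != 0 -> n*b = a*d ->
  n'*b + n*b' = a'*d + a*d' -> (n'*d - n*d')/(d*d) = (a'*b - a*b')/(b*b).
Proof.
move=> b0 d0 E1 E2.
have hn : n = a * d / b by rewrite -E1; field.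
have hn' : n' = (a' * d + a * d' - n * b') / b by rewrite -E2; field.
rewrite hn' hn; field. by rewrite b0 d0.
Qed.

Lemma gen_add (K : fieldType) (a b c d : K) : b != 0 -> d != 0 ->
  a / b + c / d = (a * d + c * b) / (b * d).
Proof. by move=> b0 d0; field; rewrite ?b0 ?d0. Qed.
Lemma gen_add_d (K : fieldType) (a b c d a' b' c' d' : K) : b != 0 -> d != 0 ->
  ((a' * d + a * d' + (c' * b + c * b')) * (b * d) - (a * d + c * b) * (b' * d + b * d')) / ((b * d) * (b * d))
  = (a' * b - a * b') / (b * b) + (c' * d - c * d') / (d * d).
Proof. by move=> b0 d0; field; rewrite ?b0 ?d0. Qed.
Lemma gen_mul (K : fieldType) (a b c d : K) : b != 0 -> d != 0 ->
  a / b * (c / d) = (a * c) / (b * d).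
Proof. by move=> b0 d0; field; rewrite ?b0 ?d0. Qed.
Lemma gen_mul_d (K : fieldType) (a b c d a' b' c' d' : K) : b != 0 -> d != 0 ->
  ((a' * c + a * c') * (b * d) - (a * c) * (b' * d + b * d')) / ((b * d) * (b * d))
  = (a' * b - a * b') / (b * b) * (c / d) + a / b * ((c' * d - c * d') / (d * d)).
Proof. by move=> b0 d0; field; rewrite ?b0 ?d0. Qed.

Lemma gen_comm (K : comRingType) (a ai aj aij b bi bj bij : K) :
 ((aij * b + aj * bi - (ai * bj + a * bij)) * (b * b) - (aj * b - a * bj) * (bi * b + b * bi))
 = ((aij * b + ai * bj - (aj * bi + a * bij)) * (b * b) - (ai * b - a * bi) * (bj * b + b * bj)).
Proof. ring. Qed.

Section FD.
Variables (R : fieldType) (N : nat).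
Local Notation F := (Frac R N).
Local Notation P := {mpoly R[N]}.

Lemma mdD (i : 'I_N) (x y : P) : (x + y)^`M(i) = x^`M(i) + y^`M(i).
Proof. exact: mderivD. Qed.
Lemma mdB (i : 'I_N) (x y : P) : (x - y)^`M(i) = x^`M(i) - y^`M(i).
Proof. exact: mderivB. Qed.
Lemma mdM (i : 'I_N) (x y : P) : (x * y)^`M(i) = x^`M(i) * y + x * y^`M(i).
Proof. exact: mderivM. Qed.

Lemma tfD (x y : P) : ((x + y)%:F : F) = x%:F + y%:F.
Proof. exact: tofracD. Qed.
Lemma tfB (x y : P) : ((x - y)%:F : F) = x%:F - y%:F.
Proof. exact: tofracB. Qed.
Lemma tfM (x y : P) : ((x * y)%:F : F) = x%:F * y%:F.
Proof. exact: tofracM. Qed.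

Lemma fderiv_frac (i : 'I_N) (a b : P) : b != 0 ->
  fderiv i (a%:F / b%:F) = (a^`M(i) * b - a * b^`M(i))%:F / (b^+2)%:F.
Proof.
move=> b0; rewrite /fderiv; set r := repr _.
have E := frac_repr (a%:F / b%:F : F); rewrite -/r in E.
have B0 : (b%:F : F) != 0 by rewrite tofrac_eq0.
have D0 : ((\d_r)%:F : F) != 0 by rewrite tofrac_eq0 denom_ratioP.
have E1 : \n_r * b = a * \d_r.
  by apply/eqP; rewrite -tofrac_eq !tofracM; apply/eqP; exact: (@alg1 F _ _ _ _ B0 D0 E).
have E2 := congr1 (mderiv i) E1; rewrite !mdM in E2.
have E3 := congr1 (@tofrac _) E2; rewrite !tofracD !tofracM in E3.
rewrite !tofracB !tofracM ?tofracXn.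
have E1' := congr1 (@tofrac _) E1; rewrite !tofracM in E1'.
exact: (@alg2 F _ _ _ _ _ _ _ _ B0 D0 E1' E3).
Qed.

Lemma fderiv_poly (i : 'I_N) (a : P) : fderiv i (a%:F) = (a^`M(i))%:F.
Proof.
have := fderiv_frac i a (oner_neq0 P); rewrite tofrac1 divr1 => ->.
by rewrite mderivC expr1n mulr1 mulr0 subr0 tofrac1 divr1.
Qed.

Lemma frac_ex (q : F) : exists a b : P, b != 0 /\ q = a%:F / b%:F.
Proof. by exists (\n_(repr q)), (\d_(repr q)); split; [exact: denom_ratioP | exact: frac_repr]. Qed.

Lemma tofrac_neq0 (b : P) : b != 0 -> (b%:F : F) != 0.
Proof. by rewrite tofrac_eq0. Qed.

Lemma fderiv_add (i : 'I_N) (p q : F) : fderiv i (p + q) = fderiv i p + fderiv i q.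
Proof.
have [a [b [b0 ->]]] := frac_ex p; have [c [d [d0 ->]]] := frac_ex q.
have B0 := tofrac_neq0 b0; have D0 := tofrac_neq0 d0.
have bd0 : b * d != 0 by rewrite mulf_neq0.
have -> : (a%:F / b%:F + c%:F / d%:F : F) = (a * d + c * b)%:F / (b * d)%:F.
  by rewrite rmorphD !rmorphM /=; exact: (@gen_add F _ _ _ _ B0 D0).
rewrite !fderiv_frac // !mdD !mdM !tfB !tfM !tfD !tfM.
exact: (@gen_add_d F _ _ _ _ _ _ _ _ B0 D0).
Qed.

Lemma fderiv_mul (i : 'I_N) (p q : F) : fderiv i (p * q) = fderiv i p * q + p * fderiv i q.
Proof.
have [a [b [b0 ->]]] := frac_ex p; have [c [d [d0 ->]]] := frac_ex q.
have B0 := tofrac_neq0 b0; have D0 := tofrac_neq0 d0.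
have bd0 : b * d != 0 by rewrite mulf_neq0.
have -> : (a%:F / b%:F * (c%:F / d%:F) : F) = (a * c)%:F / (b * d)%:F.
  by rewrite !tofracM; exact: (@gen_mul F _ _ _ _ B0 D0).
rewrite !fderiv_frac // !mdM !tfB !tfM ?tfD !tfM.
exact: (@gen_mul_d F _ _ _ _ _ _ _ _ B0 D0).
Qed.

Lemma fderiv_sub (i : 'I_N) (p q : F) : fderiv i (p - q) = fderiv i p - fderiv i q.
Proof. by apply/eqP; rewrite eq_sym subr_eq -fderiv_add subrK. Qed.

Lemma fderiv_comm (i j : 'I_N) (q : F) : fderiv i (fderiv j q) = fderiv j (fderiv i q).
Proof.
have [a [b [b0 ->]]] := frac_ex q.
have b20 : b ^+ 2 != 0 by rewrite expf_neq0.
rewrite !fderiv_frac // !mdB !expr2 !mdM (mderiv_comm j i a) (mderiv_comm j i b).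
by congr (_ %:F / _); apply: (@gen_comm P).
Qed.
End FD.

Local Close Scope quotient_scope.

Lemma gen_X (K : comRingType) (q d : K) k :
  d * q ^+ k.+1 + q * (k.+1%:R * q ^+ k * d) = k.+2%:R * q ^+ k.+1 * d.
Proof. rewrite (mulrS 1 k.+1) !exprS. ring. Qed.

Lemma gen_inv (K : fieldType) (q dq di : K) : q != 0 -> dq * q^-1 + q * di = 0 -> di = - dq / (q*q).
Proof.
move=> q0 H; have E : q * di = - (dq / q) by apply/eqP; rewrite -addr_eq0 addrC H.
by apply: (mulfI q0); rewrite E; field.
Qed.

Lemma gen_w (K : fieldType) (a b : K) : a - b != 0 ->
  (a ^+ 2 * b + a * b ^+ 2) * (a - b)^-1 + a * b * (- (a ^+ 2 - b ^+ 2) / ((a - b) * (a - b))) = 0.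
Proof. by move=> c0; field. Qed.

Lemma gen_x2 (K : comRingType) (x : K) : x ^+ 2 * x + x * x ^+ 2 = 2%:R * x ^+ 3.
Proof. ring. Qed.

Lemma gen_A (K : comRingType) (x a b c : K) :
  x ^+ 2 * ((0 * x + 2%:R * 1) * a + 2%:R * x * b + (2%:R * x * b + c))
  - (2%:R * x ^+ 3 * b + x ^+ 2 * c) = 2%:R * (x ^+ 2 * a + x ^+ 3 * b).
Proof. ring. Qed.

Lemma gen_B (K : comRingType) (x w a e : K) :
  w * (2%:R * x * a + e) - (0 * a + w * e) = 2%:R * (x * w * a).
Proof. ring. Qed.

Lemma gen_C (K : comRingType) (c a1 a2 b1 b2 : K) :
  c * a1 + b1 - (c * a2 + b2) = c * (a1 - a2) + (b1 - b2).
Proof. ring. Qed.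

Section P2.
Variables (R : fieldType) (N : nat).
Local Notation F := (Frac R N).
Local Notation P := {mpoly R[N]}.

HB.instance Definition _ (i : 'I_N) :=
  GRing.isZmodMorphism.Build F F (@fderiv R N i) (@fderiv_sub R N i).

Lemma fderiv_cF (i : 'I_N) (a : R) : fderiv i (cF N a) = 0.
Proof. by rewrite /cF fderiv_poly mderivC tofrac0. Qed.

Lemma fderiv1 (i : 'I_N) : fderiv i (1 : F) = 0.
Proof. by have := fderiv_cF i 1; rewrite /cF tofrac1. Qed.

Lemma fderiv_xF (i j : 'I_N) : fderiv i (xF j : F) = (j == i)%:R.
Proof.
rewrite /xF fderiv_poly mderivX mnm1E; case: eqP => [->|_].
  by rewrite -[X in (X - _)%MM]add0m addmK mpolyX0 scale1r tofrac1.
by rewrite scale0r tofrac0.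
Qed.

Lemma fderiv_cFM (i : 'I_N) (a : R) (q : F) : fderiv i (cF N a * q) = cF N a * fderiv i q.
Proof. by rewrite fderiv_mul fderiv_cF mul0r add0r. Qed.

Lemma fderivX (i : 'I_N) (q : F) k : fderiv i (q ^+ k.+1) = k.+1%:R * q ^+ k * fderiv i q.
Proof.
elim: k => [|k IH]; first by rewrite expr1 expr0 mulr1 mul1r.
rewrite exprS fderiv_mul IH. exact: (@gen_X F).
Qed.

Lemma fderiv_inv (i : 'I_N) (q : F) : q != 0 -> fderiv i (q^-1) = - fderiv i q / (q * q).
Proof.
move=> q0.
have : fderiv i (q * q^-1) = 0 by rewrite mulfV // fderiv1.
rewrite fderiv_mul; exact: (@gen_inv F _ _ _ q0).
Qed.


Lemma E2x_sub (p q : F) : E2x (p - q) = E2x p - E2x q.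
Proof.
rewrite /E2x -sumrB; apply: eq_bigr => l _.
by rewrite fderiv_sub mulrBr.
Qed.

HB.instance Definition _ :=
  GRing.isZmodMorphism.Build F F (@E2x R N) E2x_sub.

Lemma E2x_mul (p q : F) : E2x (p * q) = E2x p * q + p * E2x q.
Proof.
rewrite /E2x mulr_suml mulr_sumr -big_split; apply: eq_bigr => l _ /=.
by rewrite fderiv_mul mulrDr; congr (_ + _); [exact: mulrA | exact: mulrCA].
Qed.

Lemma E2x_cFM (a : R) (q : F) : E2x (cF N a * q) = cF N a * E2x q.
Proof.
rewrite /E2x mulr_sumr; apply: eq_bigr => l _.
by rewrite fderiv_cFM mulrCA.
Qed.

Lemma sum_delta (i : 'I_N) (G : 'I_N -> F) : \sum_(l < N) G l * (i == l)%:R = G i.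
Proof.
rewrite (bigD1 i) //= eqxx mulr1 big1 ?addr0 // => l /negbTE.
by rewrite eq_sym => ->; rewrite mulr0.
Qed.

Lemma E2x_xF (i : 'I_N) : E2x (xF i : F) = xF i ^+ 2.
Proof. by rewrite /E2x; under eq_bigr do rewrite fderiv_xF; rewrite sum_delta. Qed.

Lemma E2x_inv (q : F) : q != 0 -> E2x (q^-1) = - E2x q / (q * q).
Proof.
move=> q0; rewrite /E2x mulNr mulr_suml -sumrN; apply: eq_bigr => l _.
by rewrite fderiv_inv // mulNr mulrN mulrA.
Qed.

Lemma xF_sub_neq0 (i j : 'I_N) : i != j -> (xF i - xF j : F) != 0.
Proof.
move=> ij; rewrite /xF -tofracB tofrac_eq0; apply/eqP => /(congr1 (mcoeff U_(i))).
rewrite mcoeffB !mcoeffXU eqxx eq_sym (negbTE ij) subr0 mcoeff0 => /eqP.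
by rewrite oner_eq0.
Qed.

Lemma E2x_w (i j : 'I_N) : i != j -> E2x (xF i * xF j / (xF i - xF j) : F) = 0.
Proof.
move=> ij; have c0 := xF_sub_neq0 ij.
rewrite !E2x_mul E2x_inv // E2x_sub !E2x_xF.
exact: (@gen_w F _ _ c0).
Qed.

Lemma fderiv_E2x (i : 'I_N) (q : F) :
  fderiv i (E2x q) = 2%:R * xF i * fderiv i q + E2x (fderiv i q).
Proof.
rewrite {1}/E2x raddf_sum /= /E2x -[2%:R * _ * _](sum_delta i (fun l => 2%:R * xF l * fderiv l q)).
rewrite -big_split; apply: eq_bigr => l _ /=.
rewrite fderiv_mul (fderivX i (xF l) 1) fderiv_xF fderiv_comm expr1.
by rewrite (eq_sym l i) mulrAC.
Qed.

Lemma fderiv_nat (i : 'I_N) k : fderiv i (k%:R : F) = 0.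
Proof. by rewrite raddfMn /= fderiv1 mul0rn. Qed.

Lemma E2x_xF2 (i : 'I_N) : E2x (xF i ^+ 2 : F) = 2%:R * xF i ^+ 3.
Proof. by rewrite expr2 E2x_mul E2x_xF; exact: (@gen_x2 F). Qed.

Lemma commA (q : F) :
  \sum_(i < N) xF i ^+ 2 * fderiv i (fderiv i (E2x q))
  - E2x (\sum_(i < N) xF i ^+ 2 * fderiv i (fderiv i q))
  = 2%:R * \sum_(i < N) (xF i ^+ 2 * fderiv i q + xF i ^+ 3 * fderiv i (fderiv i q)).
Proof.
rewrite (raddf_sum (@E2x R N)) -sumrB mulr_sumr; apply: eq_bigr => i _.
rewrite fderiv_E2x raddfD /= fderiv_E2x !fderiv_mul fderiv_nat fderiv_xF eqxx.
rewrite E2x_mul E2x_xF2.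
exact: (@gen_A F).
Qed.

Lemma commB (q : F) :
  \sum_(i < N) \sum_(j < N | j != i) (xF i * xF j / (xF i - xF j)) * fderiv i (E2x q)
  - E2x (\sum_(i < N) \sum_(j < N | j != i) (xF i * xF j / (xF i - xF j)) * fderiv i q)
  = 2%:R * \sum_(i < N) \sum_(j < N | j != i) xF i * (xF i * xF j / (xF i - xF j)) * fderiv i q.
Proof.
rewrite (raddf_sum (@E2x R N)) -sumrB mulr_sumr; apply: eq_bigr => i _.
rewrite (raddf_sum (@E2x R N)) -sumrB mulr_sumr; apply: eq_bigr => j ji.
rewrite /= fderiv_E2x (E2x_mul (xF i * xF j / (xF i - xF j)) (fderiv i q)) E2x_w; last by rewrite eq_sym.
exact: (@gen_B F).
Qed.

Lemma comm_formula (alpha : R) (q : F) :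
  commDE2 alpha q =
  cF N (alpha / 2) * (2%:R * \sum_(i < N) (xF i ^+ 2 * fderiv i q + xF i ^+ 3 * fderiv i (fderiv i q)))
  + 2%:R * \sum_(i < N) \sum_(j < N | j != i) xF i * (xF i * xF j / (xF i - xF j)) * fderiv i q.
Proof.
rewrite /commDE2 /Dx raddfD /= E2x_cFM -commA -commB.
exact: (@gen_C F).
Qed.
End P2.

Lemma mpoly_ring_ind (n : nat) (K : comRingType) (Q : {mpoly K[n]} -> Prop) :
  (forall c, Q c%:MP) -> (forall i, Q 'X_i) ->
  (forall p q, Q p -> Q q -> Q (p + q)) -> (forall p q, Q p -> Q q -> Q (p * q)) ->
  forall p, Q p.
Proof.
move=> QC QX QD QM p; elim/mpolyind: p => [|c m p _ _ Qp]; first by rewrite -mpolyC0.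
apply: (QD) => //; rewrite -mul_mpolyC; apply: (QM) => //.
rewrite mpolyXE_id; apply: (big_ind Q); [by rewrite -mpolyC1 | exact: (QM) | ].
move=> i Hi; elim: (m i) => [|k IH]; first by rewrite expr0 -mpolyC1.
by rewrite exprS; apply: (QM).
Qed.

Lemma gen_cr (K : comRingType) (a b c d e : K) :
  a * e * b + c * (d * e) = (a * b + c * d) * e.
Proof. ring. Qed.

Section P3.
Variables (R : fieldType) (N M : nat).
Local Notation F := (Frac R N).
Local Notation P := {mpoly R[N]}.

Lemma cF_sub : zmod_morphism (@cF R N).
Proof. by move=> a b; rewrite /cF rmorphB /= tofracB. Qed.
Lemma cF_monoid : monoid_morphism (@cF R N).
Proof. by split; [rewrite /cF mpolyC1 tofrac1 | move=> a b; rewrite /cF mpolyCM tofracM]. Qed.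
HB.instance Definition _ := GRing.isZmodMorphism.Build R F (@cF R N) cF_sub.
HB.instance Definition _ := GRing.isMonoidMorphism.Build R F (@cF R N) cF_monoid.

Definition Sx (m : nat) : F := \sum_(i < N) xF i ^+ m.

Lemma rhoE (g : {mpoly R[M]}) : rho N g = mmap (@cF R N) (fun k : 'I_M => Sx k.+1) g.
Proof. by []. Qed.

Lemma rhoD (p q : {mpoly R[M]}) : rho N (p + q) = rho N p + rho N q.
Proof. by rewrite !rhoE rmorphD. Qed.
Lemma rhoB (p q : {mpoly R[M]}) : rho N (p - q) = rho N p - rho N q.
Proof. by rewrite !rhoE rmorphB. Qed.
Lemma rhoM (p q : {mpoly R[M]}) : rho N (p * q) = rho N p * rho N q.
Proof. by rewrite !rhoE rmorphM. Qed.
Lemma rhoC (c : R) : rho N (c%:MP : {mpoly R[M]}) = cF N c.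
Proof. by rewrite rhoE mmapC. Qed.
Lemma rho0 : rho N (0 : {mpoly R[M]}) = 0.
Proof. by rewrite rhoE rmorph0. Qed.
Lemma rho1 : rho N (1 : {mpoly R[M]}) = 1.
Proof. by rewrite rhoE rmorph1. Qed.
Lemma rhoZ (c : R) (p : {mpoly R[M]}) : rho N (c *: p) = cF N c * rho N p.
Proof. by rewrite -mul_mpolyC rhoM rhoC. Qed.
Lemma rhoX (k : 'I_M) : rho N ('X_k : {mpoly R[M]}) = Sx k.+1.
Proof. by rewrite rhoE mmapX mmap1U. Qed.

Lemma mderivXU (j k : 'I_M) : ('X_j : {mpoly R[M]})^`M(k) = (j == k)%:R.
Proof.
rewrite mderivX mnm1E; case: eqP => [->|_].
  by rewrite -[X in (X - _)%MM]add0m addmK mpolyX0 scale1r.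
by rewrite scale0r.
Qed.

Lemma sum_deltaM (j : 'I_M) (G : 'I_M -> F) : \sum_(k < M) (j == k)%:R * G k = G j.
Proof.
rewrite (bigD1 j) //= eqxx mul1r big1 ?addr0 // => l /negbTE.
by rewrite eq_sym => ->; rewrite mul0r.
Qed.

Lemma fderiv_Sx (i : 'I_N) m : fderiv i (Sx m.+1) = m.+1%:R * xF i ^+ m.
Proof.
rewrite /Sx raddf_sum /=.
under eq_bigr do rewrite fderivX fderiv_xF.
rewrite -(sum_delta i (fun l => m.+1%:R * xF l ^+ m)); apply: eq_bigr => l _.
by rewrite eq_sym.
Qed.

Lemma CR0 (g : {mpoly R[M]}) (i : 'I_N) :
  fderiv i (rho N g) = \sum_(k < M) rho N (g^`M(k)) * fderiv i (rho N ('X_k : {mpoly R[M]})).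
Proof.
elim/mpoly_ring_ind: g.
- move=> c; rewrite rhoC fderiv_cF big1 // => k _.
  by rewrite mderivC rho0 mul0r.
- move=> j; rewrite -[LHS](sum_deltaM j (fun k => fderiv i (rho N ('X_k : {mpoly R[M]})))).
  apply: eq_bigr => k _; rewrite mderivXU.
  by case: (j == k); rewrite ?mulr1n ?mulr0n ?rho1 ?rho0.
- move=> p q IHp IHq; rewrite rhoD raddfD /= IHp IHq -big_split; apply: eq_bigr => k _ /=.
  by rewrite mderivD rhoD mulrDl.
- move=> p q IHp IHq; rewrite rhoM fderiv_mul IHp IHq mulr_suml mulr_sumr -big_split.
  apply: eq_bigr => k _ /=.
  rewrite mderivM rhoD !rhoM.
  exact: (@gen_cr F).
Qed.

Lemma CR (g : {mpoly R[M]}) (i : 'I_N) :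
  fderiv i (rho N g) = \sum_(k < M) rho N (g^`M(k)) * (k.+1%:R * xF i ^+ k).
Proof. by rewrite CR0; apply: eq_bigr => k _; rewrite rhoX fderiv_Sx. Qed.
End P3.

Section P4.
Variables (R : fieldType) (M : nat).

Lemma dp_ord (k : 'I_M) (h : {mpoly R[M]}) : dp k.+1 h = h^`M(k).
Proof. by rewrite /dp valK. Qed.

Lemma dp_out k (h : {mpoly R[M]}) : (M <= k)%N -> dp k.+1 h = 0.
Proof. by move=> kM; rewrite /dp insubN // -leqNgt. Qed.

Lemma dp0 (h : {mpoly R[M]}) : dp 0 h = 0.
Proof. by []. Qed.

Lemma dp_zero k : dp k (0 : {mpoly R[M]}) = 0.
Proof. by case: k => [|k] //=; case: (insub k) => //= a; rewrite mderiv0. Qed.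

Lemma dp_comm a b (h : {mpoly R[M]}) : dp a (dp b h) = dp b (dp a h).
Proof.
case: a => [|a]; first by rewrite dp0 dp_zero.
case: b => [|b]; first by rewrite dp0 dp_zero.
rewrite /dp; case: (insub a) => [u|] /=; case: (insub b) => [v|] //=.
  by rewrite mderiv_comm.
by rewrite mderiv0.
by rewrite mderiv0.
Qed.

Lemma pp_ord (k : 'I_M) : pp R M k.+1 = 'X_k.
Proof. by rewrite /pp valK. Qed.

Lemma pp_out k : (M <= k)%N -> pp R M k.+1 = 0.
Proof. by move=> kM; rewrite /pp insubN // -leqNgt. Qed.

Variable n : nat.

Lemma embE (f : {mpoly R[n]}) : emb M f = mmap (@mpolyC M R) (fun i : 'I_n => pp R M i.+1) f.
Proof. by []. Qed.

Lemma emb_van (f : {mpoly R[n]}) (k : 'I_M) : (n <= k)%N -> (emb M f)^`M(k) = 0.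
Proof.
move=> nk; elim/mpoly_ring_ind: f.
- by move=> c; rewrite embE mmapC mderivC.
- move=> i; rewrite embE mmapX mmap1U.
  case: (ltnP i M) => iM.
    rewrite -[i : nat]/(val (Ordinal iM)) pp_ord mderivXU.
    have : (Ordinal iM == k) = false.
      by apply/negbTE; rewrite -val_eqE /= neq_ltn (leq_trans (ltn_ord i) nk).
    by move=> ->.
  by rewrite pp_out // mderiv0.
- by move=> p q Hp Hq; rewrite embE rmorphD /= mderivD -!embE Hp Hq addr0.
- by move=> p q Hp Hq; rewrite embE rmorphM /= mderivM -!embE Hp Hq mulr0 mul0r addr0.
Qed.

Lemma emb_vanN (f : {mpoly R[n]}) k : (n <= k)%N -> dp k.+1 (emb M f) = 0.
Proof.
move=> nk; case: (ltnP k M) => kM; last by rewrite dp_out.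
by rewrite -[k]/(val (Ordinal kM)) dp_ord emb_van.
Qed.

End P4.

Lemma gen_pair (K : fieldType) (a b : K) k : a - b != 0 ->
  a * (a * b / (a - b)) * a ^+ k + b * (b * a / (b - a)) * b ^+ k
  = \sum_(m < k.+1) a ^+ (k - m).+1 * b ^+ m.+1.
Proof.
move=> c0; have c1 : b - a != 0 by rewrite -oppr_eq0 opprB.
transitivity (a * b * (a ^+ k.+1 - b ^+ k.+1) / (a - b)).
  by rewrite !exprS; field; rewrite c0 c1.
rewrite subrXX /=.
have -> : forall X, a * b * ((a - b) * X) / (a - b) = a * b * X by move=> X; field.
rewrite mulr_sumr; apply: eq_bigr => m _; rewrite !exprS; ring.
Qed.

Section P5.
Variables (R : fieldType) (N : nat).
Local Notation F := (Frac R N).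
Local Notation SS := (@Sx R N).

Lemma swap_sum (G : 'I_N -> 'I_N -> F) :
  \sum_(i < N) \sum_(j < N | j != i) G i j = \sum_(i < N) \sum_(j < N | j != i) G j i.
Proof.
under eq_bigr do rewrite big_mkcond /=.
rewrite exchange_big /=; apply: eq_bigr => i _.
by rewrite [RHS]big_mkcond /=; apply: eq_bigr => j _; rewrite eq_sym.
Qed.

Lemma offdiag (a b : nat) :
  \sum_(i < N) \sum_(j < N | j != i) (xF i ^+ a * xF j ^+ b : F) = SS a * SS b - SS (a + b).
Proof.
rewrite /SS mulr_suml -sumrB; apply: eq_bigr => i _.
rewrite mulr_sumr [in RHS](bigD1 i) //= -exprD addrC addrK.
by [].
Qed.

Definition Tk (k : nat) : F :=
  \sum_(i < N) \sum_(j < N | j != i) xF i * (xF i * xF j / (xF i - xF j)) * xF i ^+ k.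

Lemma Tk_id k : 2%:R * Tk k = \sum_(m < k.+1) (SS (k - m).+1 * SS m.+1 - SS k.+2).
Proof.
rewrite mulr2n mulrDl mul1r {2}/Tk swap_sum /Tk -big_split /=.
transitivity (\sum_(i < N) \sum_(j < N | j != i) \sum_(m < k.+1) (xF i ^+ (k - m).+1 * xF j ^+ m.+1 : F)).
  apply: eq_bigr => i _; rewrite -big_split /=; apply: eq_bigr => j ji.
  by apply: gen_pair; apply: xF_sub_neq0; rewrite eq_sym.
transitivity (\sum_(m < k.+1) \sum_(i < N) \sum_(j < N | j != i) (xF i ^+ (k - m).+1 * xF j ^+ m.+1 : F)).
  rewrite exchange_big /=; apply: eq_bigr => i _.
  by rewrite exchange_big.
apply: eq_bigr => m _; rewrite offdiag.
by rewrite addSn addnS subnK // -ltnS.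
Qed.

End P5.

Lemma gen_L2 (K : comRingType) (x G c : K) k : x ^+ 2 * (G * (c * x ^+ k)) = G * c * x ^+ k.+2.
Proof. rewrite !exprS; ring. Qed.

Lemma gen_L3a (K : comRingType) (x G ck cl : K) k l :
  x ^+ 3 * (G * (cl * x ^+ l) * (ck * x ^+ k)) = G * ck * cl * x ^+ (k + l).+3.
Proof. rewrite !exprS exprD; ring. Qed.

Lemma gen_L3b (K : comRingType) (x G ck d kk : K) k : x * d = kk * x ^+ k ->
  x ^+ 3 * (G * (ck * d)) = G * ck * kk * x ^+ k.+2.
Proof.
move=> h; transitivity (x ^+ 2 * G * ck * (x * d)); first by rewrite !exprS; ring.
by rewrite h !exprS; ring.
Qed.

Lemma gen_L4 (K : comRingType) (x w G ck y : K) :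
  x * w * (G * (ck * y)) = G * ck * (x * w * y).
Proof. ring. Qed.

Lemma gen_E1 (K : comRingType) (G s ck kk : K) : ck = kk + 1 ->
  G * ck * s + G * ck * kk * s = G * (ck * ck) * s.
Proof. move=> ->; ring. Qed.

Lemma gen_E2 (K : comRingType) (G A s : K) k :
  G * k.+1%:R * (A - s *+ k.+1) = G * k.+1%:R * A - G * (k.+1%:R * k.+1%:R) * s.
Proof. rewrite -mulr_natl; ring. Qed.

Section P6.
Variables (R : fieldType) (N M : nat) (g : {mpoly R[M]}).
Local Notation F := (Frac R N).
Local Notation SS := (@Sx R N).
Local Notation c k := ((k.+1)%:R : F).

Definition Gn (k : nat) : F := rho N (dp k.+1 g).
Definition G2n (k l : nat) : F := rho N (dp l.+1 (dp k.+1 g)).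

Lemma LA1 (i : 'I_N) : fderiv i (rho N g) = \sum_(k < M) Gn k * (c k * xF i ^+ k).
Proof. by rewrite CR; apply: eq_bigr => k _; rewrite /Gn dp_ord. Qed.

Lemma LA1' (k : nat) (i : 'I_N) : fderiv i (Gn k) = \sum_(l < M) G2n k l * (c l * xF i ^+ l).
Proof. by rewrite /Gn CR; apply: eq_bigr => l _; rewrite /G2n dp_ord. Qed.

Lemma LA2 : \sum_(i < N) xF i ^+ 2 * fderiv i (rho N g) = \sum_(k < M) Gn k * c k * SS k.+2.
Proof.
under eq_bigr do rewrite LA1 mulr_sumr.
rewrite exchange_big /=; apply: eq_bigr => k _.
rewrite /Sx mulr_sumr; apply: eq_bigr => i _.
exact: (@gen_L2 F).
Qed.


Lemma xdx (i : 'I_N) k : xF i * fderiv i (xF i ^+ k : F) = k%:R * xF i ^+ k.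
Proof.
case: k => [|k]; first by rewrite expr0 fderiv1 mulr0 mul0r.
by rewrite fderivX fderiv_xF eqxx mulr1 mulrCA -exprS.
Qed.

Lemma LA3 : \sum_(i < N) xF i ^+ 3 * fderiv i (fderiv i (rho N g))
  = \sum_(k < M) \sum_(l < M) G2n k l * c k * c l * SS (k + l).+3
  + \sum_(k < M) Gn k * c k * k%:R * SS k.+2.
Proof.
under eq_bigr do rewrite LA1 raddf_sum /= mulr_sumr.
rewrite exchange_big /= -big_split /=; apply: eq_bigr => k _.
under eq_bigr do rewrite fderiv_mul LA1' fderiv_mul fderiv_nat mul0r add0r mulrDr.
rewrite big_split /=; congr (_ + _).
  rewrite /Sx; under eq_bigr do rewrite mulr_suml mulr_sumr.
  rewrite exchange_big /=; apply: eq_bigr => l _.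
  rewrite mulr_sumr; apply: eq_bigr => i _.
  exact: (@gen_L3a F).
rewrite /Sx mulr_sumr; apply: eq_bigr => i _.
exact: (@gen_L3b F _ _ _ _ _ _ (xdx i k)).
Qed.

Lemma LA4 : \sum_(i < N) \sum_(j < N | j != i) xF i * (xF i * xF j / (xF i - xF j)) * fderiv i (rho N g)
  = \sum_(k < M) Gn k * c k * Tk R N k.
Proof.
transitivity (\sum_(k < M) \sum_(i < N) \sum_(j < N | j != i)
   Gn k * c k * (xF i * (xF i * xF j / (xF i - xF j)) * xF i ^+ k)).
  rewrite exchange_big /=; apply: eq_bigr => i _.
  rewrite exchange_big /=; apply: eq_bigr => j _.
  rewrite LA1 mulr_sumr; apply: eq_bigr => k _.
  exact: (@gen_L4 F).
apply: eq_bigr => k _; rewrite /Tk mulr_sumr; apply: eq_bigr => i _.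
by rewrite mulr_sumr.
Qed.

Definition X1 : F := \sum_(k < M) Gn k * (c k * c k) * SS k.+2.
Definition X2 : F := \sum_(k < M) \sum_(l < M) G2n k l * c k * c l * SS (k + l).+3.
Definition X3' : F := \sum_(k < M) Gn k * c k * \sum_(m < k.+1) (SS (k - m).+1 * SS m.+1).
Definition X3 : F := \sum_(a < M) \sum_(b < M) Gn (a + b) * c (a + b) * (SS a.+1 * SS b.+1).

Lemma LHS_formula (alpha : R) :
  commDE2 alpha (rho N g) = cF N (alpha / 2) * (2%:R * (X1 + X2)) + (X3' - X1).
Proof.
rewrite comm_formula big_split /= LA2 LA3 LA4.
have -> : \sum_(k < M) Gn k * c k * SS k.+2 + (X2 + \sum_(k < M) Gn k * c k * k%:R * SS k.+2) = X1 + X2.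
  rewrite [in LHS]addrCA [in LHS]addrC; congr (_ + _); rewrite /X1 -big_split /=; apply: eq_bigr => k _.
  by apply: (@gen_E1 F); rewrite mulrSr.
congr (_ + _).
rewrite /X3' /X1 -sumrB mulr_sumr; apply: eq_bigr => k _.
rewrite mulrCA Tk_id sumrB sumr_const card_ord.
exact: (@gen_E2 F).
Qed.
End P6.

Lemma shift_sum (K : zmodType) (M m : nat) (H : nat -> K) : (m < M)%N ->
  (forall a, (M <= a + m)%N -> H a = 0) ->
  \sum_(k < M) (if (m <= k)%N then H (k - m)%N else 0) = \sum_(a < M) H a.
Proof.
move=> mM Hv.
rewrite -(big_mkord xpredT (fun k => if (m <= k)%N then H (k - m)%N else 0)).
rewrite -(big_mkord xpredT H).
rewrite (big_cat_nat (n := m)) //=; last exact: ltnW.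
rewrite big_nat_cond big1 ?add0r; last first.
  by move=> k /andP[/andP[_ km] _]; rewrite leqNgt km.
transitivity (\sum_(m <= k < M) H (k - m)%N).
  by apply: eq_big_nat => k /andP[mk _]; rewrite mk.
have := big_addn 0 M m xpredT (fun k => H (k - m)%N); rewrite add0n => ->.
under eq_bigr do rewrite addnK.
rewrite [RHS](big_cat_nat (n := (M - m)%N)) //=; last exact: leq_subr.
rewrite [X in _ = _ + X]big_nat_cond [X in _ = _ + X]big1 ?addr0 //.
move=> a /andP[/andP[Ma _] _]; apply: Hv.
by rewrite addnC -leq_subLR.
Qed.

Lemma triangle (K : zmodType) (M : nat) (H : nat -> nat -> K) :
  (forall a b, (M <= a + b)%N -> H a b = 0) ->
  \sum_(k < M) \sum_(m < k.+1) H (k - m)%N m = \sum_(a < M) \sum_(b < M) H a b.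
Proof.
move=> Hv.
transitivity (\sum_(k < M) \sum_(m < M) (if (m <= k)%N then H (k - m)%N m else 0)).
  apply: eq_bigr => k _.
  rewrite (big_ord_widen M (fun m => H (k - m)%N m) (ltn_ord k)) big_mkcond /=.
  by apply: eq_bigr => m _; rewrite ltnS.
rewrite exchange_big /= [RHS]exchange_big /=; apply: eq_bigr => m _.
exact: (@shift_sum K M m (fun a => H a m) (ltn_ord m) (fun a Ha => Hv a m Ha)).
Qed.

Lemma gen_P2 (K : comRingType) (c G s t : K) : c * (s * t * G) = G * c * (s * t).
Proof. ring. Qed.

Lemma gen_P3 (K : comRingType) (G s : K) a b :
  (a.+1 * b.+1)%:R * (s * G) = G * b.+1%:R * a.+1%:R * s.
Proof. rewrite natrM; ring. Qed.

Lemma gen_P1 (K : comRingType) (G s : K) k :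
  ((k.+1) ^ 2)%:R * (s * G) = G * (k.+1%:R * k.+1%:R) * s.
Proof. rewrite natrX; ring. Qed.

Section P8.
Variables (R : fieldType) (N M : nat) (g : {mpoly R[M]}).
Local Notation F := (Frac R N).
Local Notation SS := (@Sx R N).
Local Notation c k := ((k.+1)%:R : F).

Lemma Gn_out j : (M <= j)%N -> Gn N g j = 0.
Proof. by move=> Mj; rewrite /Gn dp_out // rho0. Qed.

Lemma X3_eq : X3' N g = X3 N g.
Proof.
rewrite /X3' /X3 -(@triangle F M (fun a b => Gn N g (a + b)%N * c (a + b)%N * (SS a.+1 * SS b.+1))).
  apply: eq_bigr => k _; rewrite mulr_sumr; apply: eq_bigr => m _.
  by rewrite subnK // -ltnS.
by move=> a b Hab; rewrite Gn_out // !mul0r.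
Qed.

Lemma rho_sum (I : Type) (r : seq I) (P : pred I) (G : I -> {mpoly R[M]}) :
  rho N (\sum_(i <- r | P i) G i) = \sum_(i <- r | P i) rho N (G i).
Proof. by rewrite rhoE raddf_sum. Qed.

Lemma rho_pp k : (k < M)%N -> rho N (pp R M k.+1) = SS k.+1.
Proof. by move=> kM; rewrite -[k]/(val (Ordinal kM)) pp_ord rhoX. Qed.


Lemma rho_natZ k (p : {mpoly R[M]}) : rho N (k%:R *: p) = k%:R * rho N p.
Proof. by rewrite rhoZ rmorph_nat. Qed.

Lemma piece2 :
  \sum_(1 <= i < M.+1) \sum_(1 <= j < M.+1)
     rho N ((i + j - 1)%:R *: (pp R M i * pp R M j * dp (i + j - 1) g)) = X3 N g.
Proof.
rewrite /X3 big_add1 /= big_mkord; apply: eq_bigr => a _.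
rewrite big_add1 /= big_mkord; apply: eq_bigr => b _.
have aM := ltn_ord a; have bM := ltn_ord b.
have -> : (a.+1 + b.+1 - 1 = (a + b).+1)%N by rewrite addSn addnS subn1.
rewrite rho_natZ !rhoM !rho_pp //.
exact: (@gen_P2 F).
Qed.

Lemma piece3 : (forall a b, (M <= (a + b).+2)%N -> G2n N g b a = 0) ->
  \sum_(1 <= i < M.+1) \sum_(1 <= j < M.+1)
     rho N ((i * j)%:R *: (pp R M (i + j + 1) * dp i (dp j g))) = X2 N g.
Proof.
move=> H3.
rewrite /X2 [RHS]exchange_big big_add1 [M.+1.-1]/= big_mkord; apply: eq_bigr => a _.
rewrite big_add1 [M.+1.-1]/= big_mkord; apply: eq_bigr => b _.
have -> : (a.+1 + b.+1 + 1 = (a + b).+2.+1)%N by rewrite addn1 addSn addnS.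
rewrite rho_natZ rhoM.
have -> : rho N (dp a.+1 (dp b.+1 g)) = G2n N g b a by [].
case: (ltnP (a + b).+2 M) => abM.
  rewrite rho_pp // (addnC b a).
  exact: (@gen_P3 F).
by rewrite H3 // !mulr0 !mul0r.
Qed.

Lemma piece1 : (0 < M)%N -> Gn N g M.-1 = 0 ->
  \sum_(1 <= i < M.+1) rho N (((i - 1) ^ 2)%:R *: (pp R M i * dp (i - 1) g)) = X1 N g.
Proof.
move=> M0 HG.
rewrite big_add1 [M.+1.-1]/= (big_ltn M0) subnn dp0 mulr0 scaler0 rho0 add0r.
rewrite big_add1.
rewrite /X1 -(big_mkord xpredT (fun k => Gn N g k * (c k * c k) * SS k.+2)).
rewrite [RHS](big_cat_nat (n := M.-1)) ?leq_pred //=.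
rewrite [X in _ = _ + X](big_ltn (n := M)) ?prednK // [X in _ + (_ + X)]big_geq // HG !mul0r !addr0.
apply: eq_big_nat => k /andP[_ kM].
have kM' : (k.+1 < M)%N by rewrite -ltn_predRL.
rewrite subn1 /= rho_natZ rhoM rho_pp //.
exact: (@gen_P1 F).
Qed.
End P8.

Lemma gen_final (K : comRingType) (a X1 X2 X3 : K) :
  a * (X1 + X2) + (X3 - X1) = (a - 1) * X1 + X3 + a * X2.
Proof. ring. Qed.

Theorem mainTheorem8 (R : fieldType) (hR : [pchar R] =i pred0) (alpha : R)
    (n N : nat) (f : {mpoly R[n]}) :
  commDE2 alpha (rho N (emb (2 * n + 1)%N f))
  = rho N (rhsOp alpha (emb (2 * n + 1)%N f)).
Proof.
set M := (2 * n + 1)%N; set g := emb M f.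
have two : (2%:R : R) != 0 by move/pcharf0P: hR => ->.
have h2 : cF N (alpha / 2) * 2%:R = cF N alpha.
  by rewrite -(rmorph_nat (@cF R N)) -rmorphM /= divfK.
have M0 : (0 < M)%N by rewrite /M addn1.
have HG : Gn N g M.-1 = 0.
  have -> : M.-1 = (2 * n)%N by rewrite /M addn1.
  by rewrite /Gn emb_vanN ?rho0 //; lia.
have H3 : forall a b, (M <= (a + b).+2)%N -> G2n N g b a = 0.
  move=> a b Hab; rewrite /G2n.
  case: (leqP n b) => nb; first by rewrite emb_vanN // dp_zero rho0.
  have na : (n <= a)%N by move: Hab; rewrite /M; lia.
  by rewrite dp_comm emb_vanN // dp_zero rho0.
rewrite LHS_formula X3_eq /rhsOp !rhoD !rhoZ !rho_sum.
under [X in _ = _ + X + _]eq_bigr do rewrite rho_sum.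
under [X in _ = _ + _ + _ * X]eq_bigr do rewrite rho_sum.
rewrite piece1 // piece2 piece3 //.
rewrite mulrA h2 rmorphB rmorph1 /=.
exact: (@gen_final (Frac R N)).
Qed.
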